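(* Let $H_1, H_2 : L_2 \to L_2$ be operators. Suppose there exist $\mu_1,\mu_2,\gamma_1,\gamma_2\ge 0$ and $\epsilon>0$ such that $H_1$ is incrementally $(\mu_1,\gamma_1)$-dissipative and $H_2$ is $\epsilon$-strongly incrementally $(\mu_2,\gamma_2)$-dissipative. If \[ \mu_1\mu_2<1,\qquad \mu_1\gamma_2<1,\qquad \mu_2\gamma_1<1, \] then the negative feedback interconnection of $H_1$ and $H_2$, i.e. the closed-loop operator $u\mapsto y$ defined by $y\in H_1(e)$, $e = u - w$, $w \in H_2(y)$ (equivalently the relation $(H_1^{-1}+H_2)^{-1}$), maps $L_2$ to $L_2$ and has finite incremental gain from $u$ to $y$: there exists $c<\infty$ such that $\|y_1-y_2\|\le c\|u_1-u_2\|$ for all closed-loop input/output pairs $(u_1,y_1),(u_2,y_2)$.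
   Context: $L_2 = L_2(\mathbb{R}^n)$ is the Hilbert space of square-integrable signals $u:\mathbb{R}_{\ge 0}\to\mathbb{R}^n$ with inner product $\langle u, y\rangle = \int_0^\infty u(t)^\top y(t)\,dt$ and induced norm $\|\cdot\|$. Operators are possibly multi-valued maps identified with their relations $\{(u,y): y\in H(u)\}$; relational operations: $H^{-1}=\{(y,u): y\in H(u)\}$, $H+G = \{(x,y+z) : (x,y)\in H, (x,z)\in G\}$. No causality is assumed or concluded. Definition: for $\mu,\gamma,\epsilon\ge 0$, $H:L_2\to L_2$ is $\epsilon$-strongly incrementally $(\mu,\gamma)$-dissipative if for all $u_1,u_2\in L_2$, $y_1\in H(u_1)$, $y_2\in H(u_2)$, either (i) $\|y_1-y_2\|\le \mu\|u_1-u_2\|$, or both (ii) $\langle u_1-u_2, y_1-y_2\rangle \ge \epsilon\|u_1-u_2\|^2$ and (iii) $\|y_1-y_2\|\le\gamma\|u_1-u_2\|$ hold (or all three hold). If $\epsilon=0$ it is called incrementally $(\mu,\gamma)$-dissipative. *)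

(* Defs.v *)
From HB Require Import structures.
From mathcomp Require Import all_boot all_order all_algebra.
From mathcomp Require Import all_classical all_reals all_analysis.
Set Implicit Arguments.
Unset Strict Implicit.
Unset Printing Implicit Defensive.
Import Order.TTheory GRing.Theory Num.Theory.
Local Open Scope classical_set_scope.
Local Open Scope ring_scope.

(* A signal u : R_{>=0} -> R^n, represented as a function on R whose
   values on t < 0 are irrelevant (only [0, +oo) is ever integrated). *)
Definition signal (R : realType) (n : nat) := R -> 'rV[R]_n.

Definition halfline (R : realType) : set R := `[0%R, +oo[%classic.

Definition pdot (R : realType) (n : nat) (u y : signal R n) (t : R) : R :=
  \sum_(i < n) u t ord0 i * y t ord0 i.

Definition inL2 (R : realType) (n : nat) (u : signal R n) : Prop :=
  (forall i : 'I_n, measurable_fun (@halfline R) (fun t => u t ord0 i)) /\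
  (@lebesgue_measure R).-integrable (@halfline R) (fun t => (pdot u u t)%:E).

Definition l2inner (R : realType) (n : nat) (u y : signal R n) : R :=
  Rintegral (@lebesgue_measure R) (@halfline R) (pdot u y).

Definition l2norm (R : realType) (n : nat) (u : signal R n) : R :=
  Num.sqrt (l2inner u u).

Definition ssub (R : realType) (n : nat) (u y : signal R n) : signal R n :=
  fun t => u t - y t.

(* A (possibly multi-valued) operator H : L_2 -> L_2, identified with its
   relation: H u y  means  y \in H(u). *)
Definition operator (R : realType) (n : nat) := signal R n -> signal R n -> Prop.

Definition is_L2_operator (R : realType) (n : nat) (H : operator R n) : Prop :=
  forall u y, H u y -> inL2 u /\ inL2 y.

Definition strongly_incr_dissipative (R : realType) (n : nat)
    (eps mu gam : R) (H : operator R n) : Prop :=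
  forall u1 u2 y1 y2, H u1 y1 -> H u2 y2 ->
    l2norm (ssub y1 y2) <= mu * l2norm (ssub u1 u2) \/
    (l2inner (ssub u1 u2) (ssub y1 y2) >= eps * l2norm (ssub u1 u2) ^+ 2 /\
     l2norm (ssub y1 y2) <= gam * l2norm (ssub u1 u2)).

Definition incr_dissipative (R : realType) (n : nat)
    (mu gam : R) (H : operator R n) : Prop :=
  strongly_incr_dissipative 0 mu gam H.

Definition feedback (R : realType) (n : nat) (H1 H2 : operator R n) : operator R n :=
  fun u y => exists e w, H1 e y /\ e = ssub u w /\ H2 y w.

(* Main.v *)
Require Import Defs.
From HB Require Import structures.
From mathcomp Require Import all_boot all_order all_algebra.
From mathcomp Require Import all_classical all_reals all_analysis.
From mathcomp Require Import measurable_realfun.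
From mathcomp Require Import ring lra.
Import Order.TTheory GRing.Theory Num.Theory.
Local Open Scope classical_set_scope.
Local Open Scope ring_scope.

Lemma mhalf (R : realType) : measurable (@halfline R).
Proof. exact: measurable_itv. Qed.

Lemma mhalf' (R : realType) :
  measurable (@halfline R : set (g_sigma_algebraType (R.-ocitv.-measurable))).
Proof. exact: measurable_itv. Qed.

Lemma pdot_ge0 {R : realType} {n} (u : signal R n) t : 0 <= pdot u u t.
Proof. by apply: sumr_ge0 => i _; rewrite -expr2 sqr_ge0. Qed.

Lemma pdotC {R : realType} {n} (u v : signal R n) : pdot u v = pdot v u.
Proof. by apply/funext => t; apply: eq_bigr => i _; rewrite mulrC. Qed.

Lemma pdot_meas {R : realType} {n} {u v : signal R n} : inL2 u -> inL2 v ->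
  measurable_fun (@halfline R) (pdot u v).
Proof.
move=> [mu _] [mv _]; rewrite /pdot.
apply: measurable_sum => i.
exact: measurable_funM.
Qed.

Lemma ab_le {R : realType} (a b : R) : `|a * b| <= a ^+ 2 + b ^+ 2.
Proof.
have [h|h] := lerP 0 (a * b).
  by rewrite ger0_norm //; nra.
by rewrite ltr0_norm //; nra.
Qed.

Lemma meas_conv {R : realType} (f : R -> R) :
  measurable_fun (@halfline R) f ->
  measurable_fun (@halfline R : set (g_sigma_algebraType (R.-ocitv.-measurable))) f.
Proof. exact: id. Qed.

Lemma pdot_int {R : realType} {n} {u v : signal R n} : inL2 u -> inL2 v ->
  (@lebesgue_measure R).-integrable (@halfline R) (fun t => (pdot u v t)%:E).
Proof.
move=> hu hv; have [_ iu] := hu; have [_ iv] := hv.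
have iuv := integrableD (mhalf' R) iu iv.
apply: (le_integrable (mhalf' R) _ _ iuv).
- apply/measurable_EFinP; apply: meas_conv; exact: pdot_meas.
- move=> t _; rewrite -EFinD /= lee_fin.
  rewrite [X in _ <= X]ger0_norm; last by apply: addr_ge0; exact: pdot_ge0.
  rewrite /pdot -big_split /=; apply: le_trans (ler_norm_sum _ _ _) _.
  by apply: ler_sum => i _; rewrite -!expr2; exact: ab_le.
Qed.

Definition sscale {R : realType} {n} (a : R) (u : signal R n) : signal R n :=
  fun t => a *: u t.

Lemma pdot_subl {R : realType} {n} (u v w : signal R n) t :
  pdot (ssub u v) w t = pdot u w t - pdot v w t.
Proof.
rewrite /pdot /ssub -sumrB; apply: eq_bigr => i _; rewrite !mxE mulrBl //.
Qed.

Lemma pdot_scalel {R : realType} {n} a (u w : signal R n) t :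
  pdot (sscale a u) w t = a * pdot u w t.
Proof.
rewrite /pdot /sscale mulr_sumr; apply: eq_bigr => i _; rewrite !mxE mulrA //.
Qed.

Lemma pdot_subr {R : realType} {n} (u v w : signal R n) t :
  pdot w (ssub u v) t = pdot w u t - pdot w v t.
Proof. by rewrite !(pdotC w) pdot_subl. Qed.

Lemma pdot_scaler {R : realType} {n} a (u w : signal R n) t :
  pdot w (sscale a u) t = a * pdot w u t.
Proof. by rewrite !(pdotC w) pdot_scalel. Qed.

Lemma inL2_sub {R : realType} {n} {u v : signal R n} :
  inL2 u -> inL2 v -> inL2 (ssub u v).
Proof.
move=> hu hv; have [mu _] := hu; have [mv _] := hv; split.
  move=> i.
  have -> : (fun t => ssub u v t ord0 i) = (fun t => u t ord0 i - v t ord0 i).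
    by apply/funext => t; rewrite /ssub !mxE.
  exact: measurable_funB.
have h1 := integrableB (mhalf' R) (pdot_int hu hu) (pdot_int hu hv).
have h2 := integrableB (mhalf' R) (pdot_int hv hu) (pdot_int hv hv).
have h3 := integrableB (mhalf' R) h1 h2.
apply: (eq_integrable (mhalf' R) _ _ _ h3) => t _ /=.
by rewrite pdot_subl !pdot_subr -!EFinB.
Qed.

Lemma inL2_scale {R : realType} {n} a {u : signal R n} :
  inL2 u -> inL2 (sscale a u).
Proof.
move=> hu; have [mu _] := hu; split.
  move=> i.
  have -> : (fun t => sscale a u t ord0 i) = (fun t => a * u t ord0 i).
    by apply/funext => t; rewrite /sscale !mxE.
  apply: measurable_funM => //; exact: measurable_cst.
have h1 := integrableZl (mhalf' R) (a * a) (pdot_int hu hu).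
apply: (eq_integrable (mhalf' R) _ _ _ h1) => t _ /=.
by rewrite pdot_scalel pdot_scaler -EFinM mulrA.
Qed.

Lemma l2innerC {R : realType} {n} (u v : signal R n) : l2inner u v = l2inner v u.
Proof. by rewrite /l2inner pdotC. Qed.

Lemma l2inner_ge0 {R : realType} {n} (u : signal R n) : 0 <= l2inner u u.
Proof. apply: Rintegral_ge0 => t _; exact: pdot_ge0. Qed.

Lemma l2inner_subl {R : realType} {n} {u v : signal R n} (w : signal R n) :
  inL2 u -> inL2 v -> inL2 w ->
  l2inner (ssub u v) w = l2inner u w - l2inner v w.
Proof.
move=> hu hv hw; rewrite /l2inner.
have -> : pdot (ssub u v) w = fun t => pdot u w t - pdot v w t.
  by apply/funext => t; rewrite pdot_subl.
exact: RintegralB (mhalf' R) (pdot_int hu hw) (pdot_int hv hw).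
Qed.

Lemma l2inner_scalel {R : realType} {n} a {u : signal R n} (w : signal R n) :
  inL2 u -> inL2 w ->
  l2inner (sscale a u) w = a * l2inner u w.
Proof.
move=> hu hw; rewrite /l2inner.
have -> : pdot (sscale a u) w = fun t => a * pdot u w t.
  by apply/funext => t; rewrite pdot_scalel.
exact: RintegralZl (mhalf' R) (pdot_int hu hw).
Qed.

Lemma quad_cs {R : realType} (A B C : R) :
  0 <= A -> 0 <= C ->
  (forall s t : R, 0 <= s ^+ 2 * A - 2 * s * t * B + t ^+ 2 * C) ->
  B ^+ 2 <= A * C.
Proof.
move=> hA hC h.
have h1 := h C B; have h2 := h B A; have h3 := h 1 B.
have [Cp|C0] := ltrP 0 C; first by nra.
have C0' : C = 0 by apply/le_anti/andP.
have [Ap|A0] := ltrP 0 A; first by nra.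
have A0' : A = 0 by apply/le_anti/andP.
rewrite C0' A0' in h3 *; nra.
Qed.

Lemma sq_le {R : realType} (x y : R) : 0 <= y -> x ^+ 2 <= y ^+ 2 -> x <= y.
Proof. move=> hy hxy; nra. Qed.

Lemma l2norm_ge0 {R : realType} {n} (u : signal R n) : 0 <= l2norm u.
Proof. exact: sqrtr_ge0. Qed.

Lemma l2normK {R : realType} {n} (u : signal R n) : l2norm u ^+ 2 = l2inner u u.
Proof. by rewrite /l2norm sqr_sqrtr // l2inner_ge0. Qed.

Lemma cs_sq {R : realType} {n} {a b : signal R n} : inL2 a -> inL2 b ->
  l2inner a b ^+ 2 <= l2inner a a * l2inner b b.
Proof.
move=> ha hb; apply: quad_cs; try exact: l2inner_ge0.
move=> s t.
have hsa := inL2_scale s ha; have htb := inL2_scale t hb.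
have hd := inL2_sub hsa htb.
have := l2inner_ge0 (ssub (sscale s a) (sscale t b)).
rewrite (l2inner_subl _ hsa htb hd) !(l2inner_scalel _ _ _ hd) //.
rewrite ![l2inner _ (ssub _ _)]l2innerC.
rewrite !(l2inner_subl _ hsa htb) // !(l2inner_scalel _ _ _ ha) //.
rewrite !(l2inner_scalel _ _ _ hb) // (l2innerC b a).
move=> H; apply: le_trans H _; rewrite le_eqVlt; apply/orP; left; apply/eqP; ring.
Qed.

Lemma cs {R : realType} {n} {a b : signal R n} : inL2 a -> inL2 b ->
  l2inner a b <= l2norm a * l2norm b.
Proof.
move=> ha hb; apply: sq_le; first by apply: mulr_ge0; exact: l2norm_ge0.
by rewrite exprMn !l2normK; exact: cs_sq.
Qed.

Lemma tri {R : realType} {n} {a b : signal R n} : inL2 a -> inL2 b ->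
  l2norm (ssub a b) <= l2norm a + l2norm b.
Proof.
move=> ha hb; have hd := inL2_sub ha hb.
apply: sq_le; first by apply: addr_ge0; exact: l2norm_ge0.
have hc := cs (inL2_scale (-1) ha) hb.
rewrite (l2inner_scalel _ _ _ hb) // in hc.
rewrite l2normK (l2inner_subl _ ha hb hd) !(l2innerC _ (ssub a b)).
rewrite (l2inner_subl _ ha hb ha) (l2inner_subl _ ha hb hb) (l2innerC b a).
have e1 := l2normK a; have e2 := l2normK b.
have : l2norm (sscale (-1) a) = l2norm a.
  rewrite /l2norm (l2inner_scalel _ _ _ (inL2_scale (-1) ha)) //.
  by rewrite l2innerC (l2inner_scalel _ _ _ ha) // mulrA mulrNN !mul1r.
by move=> e3; rewrite e3 in hc; nra.
Qed.

Lemma arith1 {R : realType} {m g Y E U W : R} : 0 <= m -> 0 <= g -> m * g < 1 ->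
  0 <= U -> Y <= m * E -> E <= U + W -> W <= g * Y -> Y <= m / (1 - m * g) * U.
Proof.
move=> hm hg hmg hU h1 h2 h3.
have h : Y * (1 - m * g) <= m * U by nra.
by rewrite mulrAC ler_pdivlMr // subr_gt0.
Qed.

Lemma arith2 {R : realType} (eps Y U : R) : 0 < eps -> 0 <= Y -> 0 <= U ->
  eps * Y ^+ 2 <= U * Y -> Y <= eps^-1 * U.
Proof.
move=> he hY hU h.
have [Y0|Yp] := eqVneq Y 0.
  by rewrite Y0; apply: mulr_ge0 => //; rewrite invr_ge0 ltW.
have Yp' : 0 < Y by rewrite lt0r Yp hY.
have h' : eps * Y <= U by nra.
rewrite mulrC ler_pdivlMr // mulrC //.
Qed.

Lemma c_ge0 {R : realType} {m g : R} : 0 <= m -> m * g < 1 -> 0 <= m / (1 - m * g).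
Proof. by move=> hm hmg; apply: divr_ge0 => //; rewrite subr_ge0 ltW. Qed.

Theorem theorem1 (R : realType) (n : nat) (H1 H2 : operator R n)
    (mu1 mu2 gam1 gam2 eps : R) :
  is_L2_operator H1 -> is_L2_operator H2 ->
  0 <= mu1 -> 0 <= mu2 -> 0 <= gam1 -> 0 <= gam2 -> 0 < eps ->
  incr_dissipative mu1 gam1 H1 ->
  strongly_incr_dissipative eps mu2 gam2 H2 ->
  mu1 * mu2 < 1 -> mu1 * gam2 < 1 -> mu2 * gam1 < 1 ->
  (forall u y, feedback H1 H2 u y -> inL2 u /\ inL2 y) /\
  exists c : R, forall u1 y1 u2 y2,
    feedback H1 H2 u1 y1 -> feedback H1 H2 u2 y2 ->
    l2norm (ssub y1 y2) <= c * l2norm (ssub u1 u2).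
Proof.
move=> L1 L2 hm1 hm2 hg1 hg2 he D1 D2 c1 c2 c3.
have fbL2 : forall u y e w, H1 e y -> e = ssub u w -> H2 y w ->
    [/\ inL2 u, inL2 y, inL2 e & inL2 w].
  move=> u y e w h1 ee h2.
  have [le ly] := L1 _ _ h1; have [_ lw] := L2 _ _ h2.
  have -> : u = ssub e (ssub (ssub w w) w).
    apply/funext => t; rewrite ee /ssub; apply/matrixP => i j; rewrite !mxE; ring.
  split => //; apply: inL2_sub => //; apply: inL2_sub => //; exact: inL2_sub.
split.
  move=> u y [e [w [h1 [ee h2]]]].
  by have [? ? _ _] := fbL2 _ _ _ _ h1 ee h2.
exists (mu1 / (1 - mu1 * mu2) + mu1 / (1 - mu1 * gam2) + gam1 / (1 - gam1 * mu2)
        + eps^-1).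
move=> u1 y1 u2 y2 [e1 [w1 [h11 [ee1 h21]]]] [e2 [w2 [h12 [ee2 h22]]]].
have [lu1 ly1 le1 lw1] := fbL2 _ _ _ _ h11 ee1 h21.
have [lu2 ly2 le2 lw2] := fbL2 _ _ _ _ h12 ee2 h22.
have ldu := inL2_sub lu1 lu2; have ldy := inL2_sub ly1 ly2.
have ldw := inL2_sub lw1 lw2.
have de : ssub e1 e2 = ssub (ssub u1 u2) (ssub w1 w2).
  apply/funext => t; rewrite ee1 ee2 /ssub; apply/matrixP => i j; rewrite !mxE; ring.
set Y := l2norm (ssub y1 y2); set U := l2norm (ssub u1 u2).
set W := l2norm (ssub w1 w2); set E := l2norm (ssub e1 e2).
have hU : 0 <= U := l2norm_ge0 _.
have hY : 0 <= Y := l2norm_ge0 _.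
have tE : E <= U + W by rewrite /E de; exact: tri.
have k1 := c_ge0 hm1 c1; have k2 := c_ge0 hm1 c2.
have c3' : gam1 * mu2 < 1 by rewrite mulrC.
have k3 := c_ge0 hg1 c3'.
have k4 : 0 <= eps^-1 by rewrite invr_ge0 ltW.
suff : Y <= mu1 / (1 - mu1 * mu2) * U \/ Y <= mu1 / (1 - mu1 * gam2) * U \/
       Y <= gam1 / (1 - gam1 * mu2) * U \/ Y <= eps^-1 * U.
  have p1 := mulr_ge0 k1 hU; have p2 := mulr_ge0 k2 hU.
  have p3 := mulr_ge0 k3 hU; have p4 := mulr_ge0 k4 hU.
  rewrite !mulrDl; case=> [h|[h|[h|h]]]; lra.
have [A|[B1 B2]] := D1 _ _ _ _ h11 h12; have [a|[b1 b2]] := D2 _ _ _ _ h21 h22.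
- by left; exact: (arith1 hm1 hm2 c1 hU A tE a).
- by right; left; exact: (arith1 hm1 hg2 c2 hU A tE b2).
- by right; right; left; exact: (arith1 hg1 hm2 c3' hU B2 tE a).
right; right; right; apply: arith2 => //.
have hc := cs ldu ldy.
rewrite de (l2inner_subl _ ldu ldw ldy) mul0r in B1.
rewrite l2innerC in b1.
rewrite -/Y -/U in hc b1; lra.
Qed.
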